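(* For each integer $k\geq 2$ there is a finite algebra $\mathbf{A}$ with a $1$-pointed $k$-cube term whose growth rate satisfies $d_{\mathbf{A}}(n)\in \Theta(n^{k-1})$.
   Context: An algebra $\mathbf{A}$ has a $1$-pointed $k$-cube term if there is a term $F(x_1,\dots,x_m)$ in the language of $\mathbf{A}$ and a $k\times m$ matrix $M=[y_{i,j}]$ whose entries are variables and exactly one constant symbol (a nullary operation symbol of the language) such that every column of $M$ contains an entry different from the variable $x$ and the identities $F(y_{i,1},\dots,y_{i,m})\approx x$, $i=1,\dots,k$, hold in $\mathbf{A}$. $d_{\mathbf{A}}(n)$ is the least size of a generating set of $\mathbf{A}^n$. *)

(* Defs.v *)
From mathcomp Require Import all_boot.
From Stdlib Require Import ClassicalEpsilon.
Set Implicit Arguments. Unset Strict Implicit. Unset Printing Implicit Defensive.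

(* A finite algebra: finite (nonempty checked separately) carrier, finite
   language of operation symbols with arities, and interpretations. *)
Record algebra := Algebra {
  carrier : finType;
  sym : finType;
  arity : sym -> nat;
  op : forall f : sym, (arity f).-tuple carrier -> carrier }.

Inductive term (S : Type) (ar : S -> nat) (V : Type) : Type :=
  | tvar : V -> term ar V
  | tapp (f : S) : ('I_(ar f) -> term ar V) -> term ar V.
Arguments tvar {S ar V}.
Arguments tapp {S ar V}.

Fixpoint tsubst (S : Type) (ar : S -> nat) (V W : Type)
  (s : V -> term ar W) (t : term ar V) : term ar W :=
  match t with
  | tvar v => s v
  | tapp f ts => tapp f (fun i => tsubst s (ts i))
  end.

Fixpoint teval (A : algebra) (V : Type) (e : V -> carrier A)
  (t : term (@arity A) V) : carrier A :=
  match t with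
  | tvar v => e v
  | tapp f ts => op [tuple teval e (ts i) | i < arity f]
  end.

(* Entries of the matrix M: [Some v] is the variable v, [None] is the
   (single) constant symbol c (nullary, so the argument function is vacuous). *)
Definition cube_entry (A : algebra) (c : sym A) (x : nat) (y : option nat)
  : term (@arity A) nat :=
  match y with
  | Some v => tvar v
  | None => tapp c (fun _ => tvar x)
  end.

Definition has_1pointed_cube_term (A : algebra) (k : nat) : Prop :=
  exists (c : sym A), arity c = 0 /\
  exists (m : nat) (F : term (@arity A) 'I_m)
         (M : 'I_k -> 'I_m -> option nat) (x : nat),
    (exists i j, M i j = None) /\
    (forall j, exists i, M i j <> Some x) /\
    (forall (i : 'I_k) (e : nat -> carrier A),
        teval e (tsubst (fun j => cube_entry c x (M i j)) F) = e x).

Inductive in_sg (A : algebra) (n : nat) (S : {set {ffun 'I_n -> carrier A}})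
  : {ffun 'I_n -> carrier A} -> Prop :=
  | sg_base a : a \in S -> in_sg S a
  | sg_op (f : sym A) (args : 'I_(arity f) -> {ffun 'I_n -> carrier A}) :
      (forall i, in_sg S (args i)) ->
      in_sg S [ffun l => op [tuple args i l | i < arity f]].

Definition generates (A : algebra) (n : nat) (S : {set {ffun 'I_n -> carrier A}}) :=
  forall a, in_sg S a.

Definition decP (P : Prop) : bool :=
  if excluded_middle_informative P then true else false.

Lemma gen_exists (A : algebra) (n : nat) :
  exists d, decP (exists S : {set {ffun 'I_n -> carrier A}},
                    #|S| = d /\ generates S).
Proof.
exists #|[set: {ffun 'I_n -> carrier A}]|.
rewrite /decP; case: excluded_middle_informative => // [[]].
exists [set: {ffun 'I_n -> carrier A}]; split => // a.
by apply: sg_base; rewrite inE.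
Qed.

Definition dA (A : algebra) (n : nat) : nat := ex_minn (gen_exists A n).

(* Main.v *)
Require Import Defs.
From mathcomp Require Import all_boot.
From Stdlib Require Import ClassicalEpsilon.
From mathcomp Require Import zify.
Set Implicit Arguments. Unset Strict Implicit. Unset Printing Implicit Defensive.


Lemma count_card (T : finType) (P : pred T) : count P (enum T) = #|[set i | P i]|.
Proof. rewrite cardE /enum_mem size_filter count_filter; apply: eq_count => x; by rewrite !inE andbT. Qed.

Lemma val_mktuple n (T : Type) (f : 'I_n -> T) : val (mktuple f) = [seq f i | i <- enum 'I_n].
Proof. by []. Qed.

Definition z3 : 'I_3 := ord0.
Definition o3 : 'I_3 := Ordinal (isT : 1 < 3).
Definition t3 : 'I_3 := Ordinal (isT : 2 < 3).

Lemma I3cases (x : 'I_3) : [\/ x = z3, x = o3 | x = t3].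
Proof.
case: x => [[|[|[|//]]] H]; [apply: Or31|apply: Or32|apply: Or33]; exact: val_inj.
Qed.

Definition hop (s : seq 'I_3) : 'I_3 :=
  if has (fun x => x == t3) s then t3
  else if count (fun x => x == z3) s == size s then z3
  else if count (fun x => x == z3) s == 1 then o3 else t3.

Definition ar (m : nat) (b : bool) : nat := if b then m.+2 else 0.
Definition opA (m : nat) (b : bool) : (ar m b).-tuple 'I_3 -> 'I_3 :=
  if b return (ar m b).-tuple 'I_3 -> 'I_3 then fun t => hop t else fun _ => z3.
Definition Alg m := @Algebra (ordinal 3) bool (ar m) (@opA m).

Definition V n := {ffun 'I_n -> 'I_3}.
Definition col m n (args : 'I_(m.+2) -> V n) (l : 'I_n) := [seq args i l | i <- enum 'I_(m.+2)].

Lemma sg_h m n (S : {set {ffun 'I_n -> carrier (Alg m)}}) (args : 'I_(m.+2) -> V n) (v : V n) :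
  (forall i, in_sg S (args i)) -> (forall l, hop (col args l) = v l) -> in_sg S v.
Proof.
move=> H Hv.
have := @sg_op (Alg m) n S true args H.
congr in_sg; apply/ffunP => l; rewrite ffunE /= -Hv /col; congr hop.
Qed.

Definition Z m n (args : 'I_(m.+2) -> V n) l := [set i | args i l == z3].

Lemma hop_col m n (args : 'I_(m.+2) -> V n) l :
  (forall i, args i l != t3) ->
  hop (col args l) = if #|Z args l| == m.+2 then z3 else if #|Z args l| == 1 then o3 else t3.
Proof.
move=> H; rewrite /hop /col.
have -> : has (fun x => x == t3) [seq args i l | i <- enum 'I_(m.+2)] = false.
  by apply/negbTE/hasPn => x /mapP [i _ ->]; exact: H.
by rewrite count_map size_map size_enum_ord count_card.
Qed.

Lemma hop_t3 m n (args : 'I_(m.+2) -> V n) l i : args i l = t3 -> hop (col args l) = t3.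
Proof.
move=> H; rewrite /hop /col.
have -> // : has (fun x => x == t3) [seq args i l | i <- enum 'I_(m.+2)].
by apply/hasP; exists (args i l); [apply: map_f; rewrite mem_enum | rewrite H].
Qed.

Definition ind n (T : {set 'I_n}) : V n := [ffun l => if l \in T then o3 else z3].

Lemma ind_inj n : injective (@ind n).
Proof.
move=> A B E; apply/setP => l; have := congr1 (fun f : V n => f l) E; rewrite !ffunE.
by case: (l \in A); case: (l \in B).
Qed.

Lemma irred m n (T : {set 'I_n}) (S : {set {ffun 'I_n -> carrier (Alg m)}}) :
  #|T| = m.+1 -> forall a, in_sg S a -> a = ind T -> a \in S.
Proof.
move=> cT a; elim=> [b bS _ // | [] args _ IH E].
-
  have Ev l : hop (col args l) = if l \in T then o3 else z3.
    have := congr1 (fun f : {ffun _ -> _} => f l) E; rewrite !ffunE /= => <-.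
    by [].
  have noT l i : args i l != t3.
    apply/eqP => H; have := Ev l; rewrite (hop_t3 H); by case: (l \in T).
  pose g l := odflt ord0 [pick i in Z args l].
  have [j jn] : exists j, j \notin [set g l | l in T].
    apply/existsP; rewrite -negb_forall; apply/negP => /forallP Hall.
    have : #|[set: 'I_(m.+2)]| <= #|[set g l | l in T]|.
      by apply/subset_leq_card/subsetP => x _; exact: Hall.
    rewrite cardsT card_ord => H.
    by have := leq_trans H (leq_imset_card _ _); rewrite cT ltnn.
  have aj : args j = ind T.
    apply/ffunP => l; rewrite ffunE; have := Ev l; rewrite hop_col //.
    case lT: (l \in T).
    + case: eqP => [_ |_]; first by move=> /eqP; rewrite -val_eqE.
      case: eqP => [/eqP /cards1P [i0 Hi0] _ | _ ]; last by [].
      have gl : g l = i0.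
        rewrite /g Hi0; case: pickP => [x|/(_ i0)]; rewrite !inE ?eqxx //.
        by move/eqP.
      case: (I3cases (args j l)) => // Hz.
      * have : j \in Z args l by rewrite inE Hz.
        rewrite Hi0 inE => /eqP Ej; case/negP: jn; apply/imsetP; exists l; rewrite ?lT //.
        by rewrite gl Ej.
      * by move: (noT l j); rewrite Hz.
    + case: eqP => [Hc _|_]; last by case: eqP => _ /eqP; rewrite -val_eqE.
      have : Z args l == setT by rewrite eqEcard subsetT cardsT card_ord Hc leqnn.
      move/eqP => ZT; have : j \in Z args l by rewrite ZT inE.
      by rewrite inE => /eqP.
  by rewrite E -aj; apply: IH; rewrite aj.
- have [t tT] : exists t, t \in T by apply/set0Pn; rewrite -card_gt0 cT.
  have := congr1 (fun f : {ffun _ -> _} => f t) E; rewrite !ffunE tT /=.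
  by move/eqP; rewrite -val_eqE.
Qed.

Lemma ind_val n (T : {set 'I_n}) l : ind T l != t3.
Proof. by rewrite ffunE; case: (l \in T). Qed.

Lemma ind_z n (T : {set 'I_n}) l : (ind T l == z3) = (l \notin T).
Proof. by rewrite ffunE; case: (l \in T). Qed.

Lemma gen_ind m n (S : {set {ffun 'I_n -> carrier (Alg m)}}) :
  (forall T : {set 'I_n}, #|T| <= m.+1 -> ind T \in S) -> forall T, in_sg S (ind T).
Proof.
move=> HS T; have [N] := ubnP #|T|; elim: N T => // N IH T hN.
case: (leqP #|T| m.+1) => hT; first by apply: sg_base; exact: HS.
have [x0 _] : exists x0, x0 \in T by apply/set0Pn; rewrite -card_gt0 (leq_trans _ hT).
pose s := enum T.
have ss : size s = #|T| by rewrite /s cardE.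
pose t (j : 'I_(m.+1)) := nth x0 s j.
have tT j : t j \in T by rewrite -mem_enum mem_nth // ss (leq_trans (ltn_ord j)) // ltnW.
have tinj : injective t.
  move=> j1 j2 /eqP; rewrite /t nth_uniq ?enum_uniq ?ss //.
  - by move/eqP/val_inj.
  - by rewrite (leq_trans (ltn_ord j1)) // ltnW.
  - by rewrite (leq_trans (ltn_ord j2)) // ltnW.
pose T2 := [set t j | j in 'I_(m.+1)].
pose args (i : 'I_(m.+2)) := match unlift ord_max i with Some j => ind (T :\ t j) | None => ind T2 end.
apply: (@sg_h m n S args).
- move=> i; rewrite /args; case: unliftP => [j _|_]; apply: IH.
  + by rewrite (cardsD1 (t j) T) tT add1n in hN.
  + rewrite -ltnS; apply: leq_trans hN; rewrite ltnS.
    by apply: leq_ltn_trans (leq_imset_card _ _) _; rewrite card_ord.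
- move=> l; rewrite hop_col; last by move=> i; rewrite /args; case: unlift => *; apply: ind_val.
  have T2T : T2 \subset T by apply/subsetP => y /imsetP [j _ ->].
  rewrite ffunE; case lT: (l \in T).
  + case: (boolP (l \in T2)) => [/imsetP [j0 _ ->]|lT2].
    * have -> : Z args (t j0) = [set lift ord_max j0].
        apply/setP => i; rewrite !inE /args; case: unliftP => [j ->|->].
        - by rewrite ind_z !inE tT andbT negbK (inj_eq tinj) (inj_eq (@lift_inj _ _)) eq_sym.
        - by rewrite ind_z imset_f //; apply/esym/negbTE/neq_lift.
      by rewrite cards1.
    * have -> : Z args l = [set ord_max].
        apply/setP => i; rewrite !inE /args; case: unliftP => [j ->|->].
        - rewrite ind_z !inE lT andbT negbK.
          have -> : (l == t j) = false by apply: contraNF lT2 => /eqP ->; exact: imset_f.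
          by rewrite eq_sym; apply/esym/negbTE/neq_lift.
        - by rewrite ind_z lT2 eqxx.
      by rewrite cards1.
  + have -> : Z args l = setT.
      apply/setP => i; rewrite !inE /args; case: unlift => [j|]; rewrite ind_z.
      * by rewrite !inE lT andbF.
      * by apply/negP => /(subsetP T2T); rewrite lT.
    by rewrite cardsT card_ord eqxx.
Qed.

Lemma gen_all m n (S : {set {ffun 'I_n -> carrier (Alg m)}}) :
  (forall T : {set 'I_n}, #|T| <= m.+1 -> ind T \in S) -> generates S.
Proof.
move=> HS v.
pose B := [set l | v l == t3]; pose O := [set l | v l == o3].
pose args (i : 'I_(m.+2)) := if i == ord0 then ind B else ind (B :|: O).
apply: (@sg_h m n S args).
  by move=> i; rewrite /args; case: (i == ord0); apply: gen_ind.
move=> l; rewrite hop_col; last by move=> i; rewrite /args; case: (i == ord0); apply: ind_val.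
case: (I3cases (v l)) => E.
- have -> : Z args l = setT.
    apply/setP => i; rewrite !inE /args; case: (i == ord0); rewrite ind_z !inE E //.
  by rewrite cardsT card_ord eqxx.
- have -> : Z args l = [set ord0].
    apply/setP => i; rewrite !inE /args; case: (i == ord0); rewrite ind_z !inE E //.
  by rewrite cards1.
- have -> : Z args l = set0.
    apply/setP => i; rewrite !inE /args; case: (i == ord0); rewrite ind_z !inE E //.
  by rewrite cards0.
Qed.

Definition S0 m n : {set {ffun 'I_n -> carrier (Alg m)}} :=
  [set ind [set i | Some i \in codom f] | f : {ffun 'I_(m.+1) -> option 'I_n}].

Lemma S0_card m n : #|S0 m n| <= n.+1 ^ m.+1.
Proof.
apply: leq_trans (leq_imset_card _ _) _.
by rewrite card_ffun card_option !card_ord.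
Qed.

Lemma S0_mem m n (T : {set 'I_n}) : #|T| <= m.+1 -> ind T \in S0 m n.
Proof.
move=> hT; pose s := [seq Some x | x <- enum T].
have ss : size s = #|T| by rewrite size_map cardE.
apply/imsetP; exists [ffun j : 'I_(m.+1) => nth None s j] => //.
congr ind; apply/setP => i; rewrite inE; apply/idP/idP.
- move=> iT; have hi : index (Some i) s < m.+1.
    by rewrite (leq_trans _ hT) // -ss index_mem mem_map ?mem_enum //; move=> x y [].
  apply/codomP; exists (Ordinal hi); rewrite ffunE /= nth_index //.
  by rewrite mem_map ?mem_enum //; move=> x y [].
- case/codomP => j; rewrite ffunE => E.
  have : Some i \in s.
    case: (ltnP j (size s)) => h; first by rewrite E mem_nth.
    by move: E; rewrite nth_default.
  by rewrite mem_map ?mem_enum //; move=> x y [].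
Qed.

Lemma dA_ge A n d : (forall S : {set {ffun 'I_n -> carrier A}}, generates S -> d <= #|S|) -> d <= dA A n.
Proof.
rewrite /dA; case: ex_minnP => d0 Hd0 _ H.
move: Hd0; unfold Defs.decP; match goal with |- context [excluded_middle_informative ?P] => destruct (excluded_middle_informative P) as [[S [HS gS]]|] end => // _.
by rewrite -HS; exact: H.
Qed.

Lemma dA_le A n (S : {set {ffun 'I_n -> carrier A}}) : generates S -> dA A n <= #|S|.
Proof.
rewrite /dA; case: ex_minnP => d0 _ min gS; apply: min.
unfold Defs.decP; match goal with |- context [excluded_middle_informative ?P] => destruct (excluded_middle_informative P) as [|[]] end => //; by exists S.
Qed.

Lemma ffact_bound n k : 2 * k <= n -> n ^ k <= 2 ^ k * n ^_ k.
Proof.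
elim: k => [|k IH] h; first by rewrite ffactn0.
have h1 : n ^ k <= 2 ^ k * n ^_ k by apply: IH; lia.
rewrite ffactnSr expnSr (expnSr 2).
have h2 : n <= 2 * (n - k) by lia.
apply: leq_trans (leq_mul h1 h2) _.
by rewrite -!mulnA leq_pmul2l ?expn_gt0 // mulnCA leq_pmul2l // mulnC.
Qed.

Lemma hop_map m (f : 'I_(m.+2) -> 'I_3) :
  (forall i, f i != t3) ->
  hop [seq f i | i <- enum 'I_(m.+2)] =
  if #|[set i | f i == z3]| == m.+2 then z3 else if #|[set i | f i == z3]| == 1 then o3 else t3.
Proof.
move=> H; rewrite /hop.
have -> : has (fun x => x == t3) [seq f i | i <- enum 'I_(m.+2)] = false.
  by apply/negbTE/hasPn => x /mapP [i _ ->]; exact: H.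
by rewrite count_map size_map size_enum_ord count_card.
Qed.

Theorem theorem5p8 :
  forall k : nat, 2 <= k ->
  exists A : algebra,
    0 < #|carrier A| /\
    has_1pointed_cube_term A k /\
    (exists (c1 c2 N : nat), 0 < c1 /\ 0 < c2 /\
       forall n : nat, N <= n ->
         n ^ (k - 1) <= c1 * dA A n /\ dA A n <= c2 * n ^ (k - 1)).
Proof.
move=> k hk; have [m ->] : exists m, k = m.+2 by exists (k - 2); lia.
exists (Alg m); split; first by rewrite card_ord.
split.
- exists false; split => //.
  exists m.+2, (@tapp _ (@arity (Alg m)) 'I_(m.+2) true (fun i => tvar i)).
  exists (fun i j => if i == j then None else Some 0), 0.
  split; first by exists ord0, ord0; rewrite eqxx.
  split; first by move=> j; exists j; rewrite eqxx.
  move=> i e /=.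
  have E (j : 'I_(m.+2)) : teval e (cube_entry (A:=Alg m) false 0 (if i == j then None else Some 0)) = if i == j then z3 else e 0.
    by case: (i == j).
  rewrite (eq_map E).
  case: (I3cases (e 0)) => ->.
  + rewrite hop_map; last by move=> j; case: (i == j).
    have -> : [set j | (if i == j then z3 else z3) == z3] = setT by apply/setP => j; rewrite !inE; case: (i == j).
    by rewrite cardsT card_ord eqxx.
  + rewrite hop_map; last by move=> j; case: (i == j).
    have -> : [set j | (if i == j then z3 else o3) == z3] = [set i].
      by apply/setP => j; rewrite !inE [j == i]eq_sym; case: (i == j).
    by rewrite cards1.
  + rewrite /hop; have -> // : has (fun x => x == t3) [seq (if i == j then z3 else t3) | j <- enum 'I_(m.+2)].
    apply/hasP; exists t3 => //; apply/mapP; exists (lift i ord0); rewrite ?mem_enum //.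
    by rewrite (negbTE (neq_lift _ _)).
- exists (2 ^ m.+1 * m.+1`!), (2 ^ m.+1), (2 * m.+1).
  split; first by rewrite muln_gt0 expn_gt0 fact_gt0.
  split; first by rewrite expn_gt0.
  move=> n hn; rewrite subn1 /=; split.
  + apply: leq_trans (ffact_bound hn) _.
    rewrite -bin_ffact -mulnA leq_pmul2l ?expn_gt0 // mulnC leq_pmul2l ?fact_gt0 //.
    apply: dA_ge => S gS.
    have <- : #|[set ind T | T in [set T : {set 'I_n} | #|T| == m.+1]]| = 'C(n, m.+1).
      by rewrite card_imset ?card_draws ?card_ord //; exact: ind_inj.
    apply: subset_leq_card; apply/subsetP => a /imsetP [T]; rewrite inE => /eqP cT ->.
    exact: (irred cT (gS (ind T))).
  + apply: leq_trans (dA_le (gen_all (@S0_mem m n))) _.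
    apply: leq_trans (S0_card m n) _.
    rewrite -expnMn leq_exp2r //; lia.
Qed.
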